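(* Let $r\in\mathbb{N}$, $d\in(0,\pi]$ and $\lambda\in(0,d/3]$. Then $$\|\mathcal{E}_{r,d,\lambda}-\mathcal{E}_{r,d}\|\le c_5\lambda,$$ where $c_5>0$ depends only on $r$.
   Context: Let $\gamma_d:=1-d/\pi$. $\mathcal{E}_{r,d}$ denotes the $2\pi$-periodic function with $\mathcal{E}_{r,d}\in C^{r-1}(\mathbb{R})$, $\int_{-\pi}^{\pi}\mathcal{E}_{r,d}(x)\,dx=0$, and $\mathcal{E}_{r,d}^{(r)}(x)=\operatorname{sign}x-\gamma_d$ for $x\in(-d,2\pi-d)\setminus\{0\}$. Fix $S\in C^\infty(\mathbb{R})$, a monotone odd function with $S(x)=\operatorname{sign}x$ for $|x|\ge 1$. Define $\tilde S_{\lambda,d}(x):=S\big((x-2\lambda)/\lambda\big)$ for $x\in[0,2\pi-d]$ and $\tilde S_{\lambda,d}(x):=-S\big((x-2\lambda+d)/\lambda\big)$ for $x\in[-d,0]$, and $S_{\lambda,d}(x):=\tilde S_{\lambda,d}(x)-\gamma_d$ for $x\in[-d,2\pi-d]$. Then $\mathcal{E}_{r,d,\lambda}$ denotes the $2\pi$-periodic function in $C^\infty(\mathbb{R})$ with $\int_{-\pi}^{\pi}\mathcal{E}_{r,d,\lambda}(x)\,dx=0$ and $\mathcal{E}_{r,d,\lambda}^{(r)}(x)=S_{\lambda,d}(x)$ for $x\in[-d,2\pi-d]$. For a $2\pi$-periodic continuous $g$, $\|g\|=\max_{x\in\mathbb{R}}|g(x)|$. *)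

(* Defs.v *)
From Stdlib Require Import Reals.
From Coquelicot Require Import Coquelicot.
Open Scope R_scope.

Definition sgn (x : R) : R :=
  if Rlt_dec 0 x then 1 else if Rlt_dec x 0 then -1 else 0.

Definition gamma_d (d : R) : R := 1 - d / PI.

Definition periodic2pi (f : R -> R) : Prop := forall x, f (x + 2 * PI) = f x.

Definition Ck (k : nat) (f : R -> R) : Prop :=
  (forall j x, (j <= k)%nat -> ex_derive_n f j x) /\
  (forall x, continuous (Derive_n f k) x).

Definition Cinf (f : R -> R) : Prop := forall n x, ex_derive_n f n x.

Definition good_S (S : R -> R) : Prop :=
  Cinf S /\
  ((forall x y, x <= y -> S x <= S y) \/ (forall x y, x <= y -> S y <= S x)) /\
  (forall x, S (- x) = - S x) /\
  (forall x, 1 <= Rabs x -> S x = sgn x).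

(* \tilde S_{lambda,d} on [-d, 2pi - d] *)
Definition Stilde (S : R -> R) (lam d x : R) : R :=
  if Rle_dec 0 x then S ((x - 2 * lam) / lam)
  else - S ((x - 2 * lam + d) / lam).

Definition S_ld (S : R -> R) (lam d x : R) : R := Stilde S lam d x - gamma_d d.

Definition is_E (r : nat) (d : R) (E : R -> R) : Prop :=
  periodic2pi E /\
  Ck (r - 1) E /\
  RInt E (- PI) PI = 0 /\
  (forall x, - d < x < 2 * PI - d -> x <> 0 ->
     is_derive_n E r x (sgn x - gamma_d d)).

Definition is_E_smooth (S : R -> R) (r : nat) (d lam : R) (E : R -> R) : Prop :=
  periodic2pi E /\
  Cinf E /\
  RInt E (- PI) PI = 0 /\
  (forall x, - d <= x <= 2 * PI - d -> is_derive_n E r x (S_ld S lam d x)).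

(* Main.v *)
Require Import Defs.
From Stdlib Require Import Reals Lra Lia ZArith.
From Coquelicot Require Import Coquelicot.
Open Scope R_scope.

Lemma per_nat f : periodic2pi f -> forall n x, f (x + 2*PI*INR n) = f x.
Proof.
  intros Hp n; induction n as [|n IH]; intros x.
  - simpl. f_equal. ring.
  - rewrite S_INR. replace (x + 2*PI*(INR n + 1)) with ((x + 2*PI*INR n) + 2*PI) by ring.
    rewrite Hp. apply IH.
Qed.

Lemma per_Z f : periodic2pi f -> forall z x, f (x - 2*PI*IZR z) = f x.
Proof.
  intros Hp z x. destruct (Z_le_gt_dec 0 z) as [H|H].
  - rewrite <- (Z2Nat.id z H). rewrite <- INR_IZR_INZ.
    rewrite <- (per_nat f Hp (Z.to_nat z) (x - 2*PI*INR (Z.to_nat z))). f_equal. ring.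
  - assert (H' : (0 <= - z)%Z) by lia.
    replace (IZR z) with (- IZR (- z)) by (rewrite opp_IZR; ring).
    rewrite <- (Z2Nat.id (-z) H'). rewrite <- INR_IZR_INZ.
    replace (x - 2 * PI * - INR (Z.to_nat (- z))) with (x + 2*PI*INR (Z.to_nat (-z))) by ring.
    apply per_nat; auto.
Qed.

Lemma per_reduce f a x : periodic2pi f -> exists y, a <= y <= a + 2*PI /\ f x = f y.
Proof.
  intros Hp. set (t := (x - a) / (2*PI)).
  destruct (base_Int_part t) as [H1 H2].
  exists (x - 2*PI*IZR (Int_part t)). split.
  - assert (HPI := PI_RGT_0).
    assert (Ht : x - a = 2*PI*t) by (unfold t; field; lra).
    split; nra.
  - symmetry; apply per_Z; auto.
Qed.

Lemma mvt_bd f a b M : 0 <= M ->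
  (forall x, a < x < b -> exists l, is_derive f x l /\ Rabs l <= M) ->
  (forall x, a <= x <= b -> continuous f x) ->
  forall u v, a <= u -> u <= v -> v <= b -> Rabs (f v - f u) <= M * (v - u).
Proof.
  intros HM Hd Hc u v H1 H2 H3.
  set (df := fun t => Rmax (-M) (Rmin M (Derive f t))).
  destruct (MVT_gen f u v df) as [c [Hc1 Hc2]].
  - intros t Ht. rewrite Rmin_left in Ht by lra. rewrite Rmax_right in Ht by lra.
    destruct (Hd t ltac:(lra)) as [l [Hl Hlb]].
    assert (E : df t = l).
    { unfold df. rewrite (is_derive_unique f t l Hl).
      apply Rabs_le_between in Hlb.
      rewrite Rmin_right by lra. rewrite Rmax_right by lra. reflexivity. }
    rewrite E; auto.
  - intros t Ht. rewrite Rmin_left in Ht by lra. rewrite Rmax_right in Ht by lra.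
    apply continuity_pt_filterlim. apply Hc. lra.
  - rewrite Hc2. rewrite Rabs_mult. rewrite (Rabs_right (v - u)) by lra.
    apply Rmult_le_compat_r; [lra|].
    unfold df. apply Rabs_le.
    split; [apply Rmax_l|]. apply Rmax_lub; [lra| apply Rmin_l].
Qed.

Lemma osc_der f f' M : periodic2pi f -> (forall x, is_derive f x (f' x)) ->
  (forall x, Rabs (f' x) <= M) -> forall x y, Rabs (f x - f y) <= 2*PI*M.
Proof.
  intros Hp Hd Hb x y.
  assert (HM : 0 <= M) by (specialize (Hb 0); pose proof (Rabs_pos (f' 0)); lra).
  destruct (per_reduce f x y Hp) as [y' [Hy Hy']]. rewrite Hy'.
  rewrite <- Rabs_Ropp. replace (- (f x - f y')) with (f y' - f x) by ring.
  assert (HPI := PI_RGT_0).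
  eapply Rle_trans.
  - apply (mvt_bd f x (x + 2*PI) M HM); try lra.
    + intros t _. exists (f' t). auto.
    + intros t _. apply ex_derive_continuous. exists (f' t). auto.
  - nra.
Qed.

Lemma S_bound S : good_S S -> forall x, Rabs (S x) <= 1.
Proof.
  intros [_ [Hm [_ Hs]]] x.
  assert (A1 : S (Rabs x + 1) = 1).
  { rewrite Hs. unfold sgn. destruct (Rlt_dec 0 (Rabs x + 1)); auto.
    pose proof (Rabs_pos x); lra. rewrite Rabs_right; pose proof (Rabs_pos x); lra. }
  assert (A2 : S (- (Rabs x + 1)) = -1).
  { rewrite Hs. unfold sgn. destruct (Rlt_dec 0 (-(Rabs x + 1))).
    pose proof (Rabs_pos x); lra. destruct (Rlt_dec (-(Rabs x + 1)) 0); auto.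
    pose proof (Rabs_pos x); lra. rewrite Rabs_left; pose proof (Rabs_pos x); lra. }
  assert (B1 : x <= Rabs x + 1) by (pose proof (Rle_abs x); lra).
  assert (B2 : - (Rabs x + 1) <= x) by (pose proof (Rle_abs (-x)); rewrite Rabs_Ropp in *; lra).
  apply Rabs_le. destruct Hm as [Hm|Hm].
  - pose proof (Hm _ _ B1); pose proof (Hm _ _ B2); lra.
  - pose proof (Hm _ _ B1); pose proof (Hm _ _ B2); lra.
Qed.

Lemma S_one S : good_S S -> forall y, 1 <= y -> S y = 1.
Proof.
  intros [_ [_ [_ Hs]]] y Hy. rewrite Hs. unfold sgn.
  destruct (Rlt_dec 0 y); auto; lra. rewrite Rabs_right; lra.
Qed.

Lemma div_ge1 a l : 0 < l -> l <= a -> 1 <= a / l.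
Proof.
  intros Hl Ha. apply (Rmult_le_reg_r l); auto.
  unfold Rdiv. rewrite Rmult_assoc, Rinv_l by lra. lra.
Qed.
Theorem lemma5p2 :
  forall S : R -> R, good_S S ->
  forall r : nat, (1 <= r)%nat ->
  exists c5 : R, 0 < c5 /\
    forall (d lam : R) (E El : R -> R),
      0 < d <= PI -> 0 < lam <= d / 3 ->
      is_E r d E -> is_E_smooth S r d lam El ->
      forall x : R, Rabs (El x - E x) <= c5 * lam.
Proof.
  intros Sf HS r Hr. destruct r as [|r']; [lia|].
  assert (HPI := PI_RGT_0).
  exists (12 * (2*PI)^r'). split.
  { apply Rmult_lt_0_compat; [lra|]. apply pow_lt; lra. }
  intros d lam E El Hd Hlam [EP [[ECd ECc] [EI ED]]] [LP [LC [LI LD]]].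
  replace (S r' - 1)%nat with r' in * by lia.
  set (H := fun k x => Derive_n El k x - Derive_n E k x).
  assert (Econt : forall k, (k <= r')%nat -> forall x, continuous (Derive_n E k) x).
  { intros k Hk x. destruct (Nat.eq_dec k r') as [->|Hne]; [apply ECc|].
    apply (@ex_derive_continuous R_AbsRing R_NormedModule). apply (ECd (S k) x). lia. }
  assert (Lcont : forall k x, continuous (Derive_n El k) x).
  { intros k x. apply (@ex_derive_continuous R_AbsRing R_NormedModule). apply (LC (S k) x). }
  assert (Hcont : forall k, (k <= r')%nat -> forall x, continuous (H k) x).
  { intros k Hk x. apply (continuous_minus (Derive_n El k) (Derive_n E k)); auto. }
  assert (Hper : forall k, periodic2pi (H k)).
  { intros k x. unfold H.
    rewrite <- !Derive_n_comp_trans.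
    rewrite (Derive_n_ext (fun y => El (y + 2*PI)) El) by (intros; apply LP).
    rewrite (Derive_n_ext (fun y => E (y + 2*PI)) E) by (intros; apply EP).
    reflexivity. }
  assert (Hder : forall k, (k < r')%nat -> forall x, is_derive (H k) x (H (S k) x)).
  { intros k Hk x. unfold H.
    apply (is_derive_minus (Derive_n El k) (Derive_n E k)).
    - apply Derive_correct. apply (LC (S k) x).
    - apply Derive_correct. apply (ECd (S k) x). lia. }
  assert (Hanch : forall k, (k <= r')%nat -> forall B, (forall x y, Rabs (H k x - H k y) <= B) ->
             forall x, Rabs (H k x) <= B).
  { intros k Hk B HB x. destruct k as [|k'].
    - assert (Hex : forall f : R -> R, (forall x, continuous f x) -> ex_RInt f (-PI) PI).
      { intros f Hf. apply (@ex_RInt_continuous R_CompleteNormedModule). intros; auto. }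
      assert (HEc : forall x, continuous E x) by (apply (Econt 0%nat); lia).
      assert (HLc : forall x, continuous El x) by (apply (Lcont 0%nat)).
      assert (HI : RInt (H 0%nat) (-PI) PI = 0).
      { unfold H. simpl.
        assert (Hm := @RInt_minus R_CompleteNormedModule El E (-PI) PI (Hex _ HLc) (Hex _ HEc)).
        transitivity (RInt El (-PI) PI - RInt E (-PI) PI); [exact Hm|]. rewrite LI, EI; ring. }
      assert (HHc : forall x, continuous (H 0%nat) x) by (apply Hcont; lia).
      assert (Hc : forall c, RInt (fun _ => c) (-PI) PI = 2*PI*c).
      { intros c. rewrite (@RInt_const R_CompleteNormedModule). unfold scal; simpl; unfold mult; simpl. ring. }
      apply Rabs_le. split.
      + assert (Hle := RInt_le (H 0%nat) (fun _ => H 0%nat x + B) (-PI) PI ltac:(lra)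
                 (Hex _ HHc) (@ex_RInt_const R_NormedModule _ _ _)).
        rewrite HI, Hc in Hle.
        assert (0 <= 2*PI*(H 0%nat x + B)).
        { apply Hle. intros y _. specialize (HB y x). apply Rabs_le_between in HB. lra. }
        nra.
      + assert (Hle := RInt_le (fun _ => H 0%nat x - B) (H 0%nat) (-PI) PI ltac:(lra)
                 (@ex_RInt_const R_NormedModule _ _ _) (Hex _ HHc)).
        rewrite HI, Hc in Hle.
        assert (2*PI*(H 0%nat x - B) <= 0).
        { apply Hle. intros y _. specialize (HB x y). apply Rabs_le_between in HB. lra. }
        nra.
    - destruct (MVT_gen (H k') 0 (2*PI) (H (S k'))) as [c [_ Hc]].
      + intros t _. apply Hder. lia.
      + intros t _. apply continuity_pt_filterlim. apply Hcont. lia.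
      + replace (2*PI) with (0 + 2*PI) in Hc at 1 by ring. rewrite Hper in Hc.
        assert (Hz : H (S k') c = 0) by nra.
        specialize (HB x c). rewrite Hz, Rminus_0_r in HB. exact HB. }
  assert (Htop : forall x, Rabs (H r' x - H r' (-d)) <= 6 * lam).
  { set (h := H r').
    set (D := fun x => S_ld Sf lam d x - (sgn x - gamma_d d)).
    assert (hD : forall x, - d < x < 2 * PI - d -> x <> 0 -> is_derive h x (D x)).
    { intros x Hx Hx0. unfold h, H, D.
      apply (is_derive_minus (Derive_n El r') (Derive_n E r')).
      - apply (LD x). lra.
      - apply (ED x Hx Hx0). }
    assert (Sb := S_bound Sf HS).
    assert (Dpos : forall x, 0 < x -> Rabs (D x) <= 2 /\ (3*lam <= x -> D x = 0)).
    { intros x Hx. unfold D, S_ld, Stilde, sgn.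
      destruct (Rle_dec 0 x); [|lra]. destruct (Rlt_dec 0 x); [|lra].
      split.
      - specialize (Sb ((x - 2*lam)/lam)). apply Rabs_le_between in Sb.
        apply Rabs_le. lra.
      - intros H3. rewrite (S_one Sf HS). ring. apply div_ge1; lra. }
    assert (Dneg : forall x, x < 0 -> Rabs (D x) <= 2 /\ (3*lam - d <= x -> D x = 0)).
    { intros x Hx. unfold D, S_ld, Stilde, sgn.
      destruct (Rle_dec 0 x); [lra|]. destruct (Rlt_dec 0 x); [lra|].
      destruct (Rlt_dec x 0); [|lra].
      split.
      - specialize (Sb ((x - 2*lam + d)/lam)). apply Rabs_le_between in Sb.
        apply Rabs_le. lra.
      - intros H3. rewrite (S_one Sf HS). ring. apply div_ge1; lra. }
    assert (hc : forall x, continuous h x) by (apply Hcont; lia).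
    assert (hA : h (2*PI - d) = h (-d)).
    { replace (2*PI - d) with (-d + 2*PI) by ring. apply Hper. }
    assert (P1 : forall x, -d <= x <= -d + 3*lam -> Rabs (h x - h (-d)) <= 6*lam).
    { intros x Hx. eapply Rle_trans.
      - apply (mvt_bd h (-d) (-d + 3*lam) 2); try lra.
        + intros t Ht. exists (D t). split; [apply hD; lra|]. apply Dneg; lra.
        + intros; auto.
      - lra. }
    assert (P2 : forall x, -d + 3*lam <= x <= 0 -> h x = h (-d + 3*lam)).
    { intros x Hx.
      assert (Hb := mvt_bd h (-d + 3*lam) 0 0 ltac:(lra)).
      assert (Rabs (h x - h (-d + 3*lam)) <= 0 * (x - (-d + 3*lam))).
      { apply Hb; try lra.
        + intros t Ht. exists (D t). split; [apply hD; lra|].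
          rewrite (proj2 (Dneg t ltac:(lra))) by lra. rewrite Rabs_R0; lra.
        + intros; auto. }
      rewrite Rmult_0_l in H0. pose proof (Rabs_pos (h x - h (-d + 3*lam))).
      assert (Rabs (h x - h (-d + 3 * lam)) = 0) by lra.
      apply Rabs_eq_0 in H2. lra. }
    assert (P3 : forall x, 3*lam <= x <= 2*PI - d -> h x = h (-d)).
    { intros x Hx. rewrite <- hA.
      assert (Hb := mvt_bd h (3*lam) (2*PI - d) 0 ltac:(lra)).
      assert (Rabs (h (2*PI - d) - h x) <= 0 * (2*PI - d - x)).
      { apply Hb; try lra.
        + intros t Ht. exists (D t). split; [apply hD; lra|].
          rewrite (proj2 (Dpos t ltac:(lra))) by lra. rewrite Rabs_R0; lra.
        + intros; auto. }
      rewrite Rmult_0_l in H0. pose proof (Rabs_pos (h (2*PI - d) - h x)).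
      assert (Rabs (h (2*PI - d) - h x) = 0) by lra.
      apply Rabs_eq_0 in H2. lra. }
    assert (P4 : forall x, 0 <= x <= 3*lam -> Rabs (h (3*lam) - h x) <= 6*lam).
    { intros x Hx. eapply Rle_trans.
      - apply (mvt_bd h 0 (3*lam) 2); try lra.
        + intros t Ht. exists (D t). split; [apply hD; lra|]. apply Dpos; lra.
        + intros; auto.
      - lra. }
    intros x. destruct (per_reduce h (-d) x (Hper r')) as [y [Hy Hxy]].
    rewrite Hxy.
    destruct (Rle_dec y (-d + 3*lam)).
    { apply P1; lra. }
    destruct (Rle_dec y 0).
    { rewrite P2 by lra. apply P1; lra. }
    destruct (Rle_dec y (3*lam)).
    { rewrite <- (P3 (3*lam)) by lra. rewrite <- Rabs_Ropp.
      replace (- (h y - h (3*lam))) with (h (3*lam) - h y) by ring. apply P4; lra. }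
    rewrite P3 by lra. rewrite Rminus_eq_0, Rabs_R0. lra. }
  assert (Main : forall j, (j <= r')%nat -> forall x, Rabs (H (r' - j)%nat x) <= 12 * lam * (2*PI)^j).
  { induction j as [|j IH]; intros Hj x.
    - replace (r' - 0)%nat with r' by lia. simpl. rewrite Rmult_1_r.
      apply Hanch; [lia|]. intros u v.
      specialize (Htop u) as A1. specialize (Htop v) as A2.
      apply Rabs_le_between in A1. apply Rabs_le_between in A2. apply Rabs_le. lra.
    - apply Hanch; [lia|]. intros u v.
      assert (E1 : (S (r' - S j)) = (r' - j)%nat) by lia.
      eapply Rle_trans.
      + apply (osc_der (H (r' - S j)%nat) (H (r' - j)%nat) (12 * lam * (2*PI)^j)).
        * apply Hper.
        * intros t. rewrite <- E1. apply Hder. lia.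
        * apply IH. lia.
      + simpl. lra. }
  intros x. specialize (Main r' (le_n _) x). replace (r' - r')%nat with 0%nat in Main by lia.
  unfold H in Main. simpl in Main. lra.
Qed.
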